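(* Suppose $N>n$ and let $(F,G)\in\mathcal R^{(1)}$. Then $r^{(2)}_{F,G}=\frac nN+\sqrt{\frac{n(N-n)}{N^2(N-1)}}$ if and only if $(F,G)$ is $2$-uniform.
   Context: $\mathcal H$ is a complex Hilbert space of finite dimension $n$, inner product linear in the first argument. A finite sequence $F=\{f_i\}_{i=1}^N$ is a frame if there are $0<A\le B$ with $A\|f\|^2\le\sum_i|\langle f,f_i\rangle|^2\le B\|f\|^2$ for all $f$. $G=\{g_i\}_{i=1}^N$ is a dual of $F$ if $f=\sum_i\langle f,g_i\rangle f_i$ for all $f$; $(F,G)$ is then an $(N,n)$ dual pair. A dual pair is $1$-uniform if $\langle f_i,g_i\rangle$ is independent of $i$, and $2$-uniform if it is $1$-uniform and $\langle f_i,g_j\rangle\langle f_j,g_i\rangle$ is the same constant for all $i\ne j$. $\mathcal A_m$ is the set of $m$-element subsets of $\{1,\dots,N\}$; $E_{\Lambda,F,G}f=\sum_{i\in\Lambda}\langle f,f_i\rangle g_i$; $\rho$ is spectral radius; $r^{(m)}_{F,G}=\max_{\Lambda\in\mathcal A_m}\rho(E_{\Lambda,F,G})$; $r^{(1)}=\inf\{r^{(1)}_{F,G}:(F,G)\text{ an }(N,n)\text{ dual pair}\}$; $\mathcal R^{(1)}=\{(F,G):r^{(1)}_{F,G}=r^{(1)}\}$. *)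

(* Defs.v *)
From HB Require Import structures.
From mathcomp Require Import all_boot all_order all_algebra.
From mathcomp Require Import complex.
From mathcomp Require Import all_classical all_reals.
Set Implicit Arguments. Unset Strict Implicit. Unset Printing Implicit Defensive.
Import Order.TTheory GRing.Theory Num.Theory.
Local Open Scope ring_scope.

Definition cmod (R : realType) (z : R[i]) : R := ComplexField.Normc.normc z.

(* standard inner product, linear in the first argument *)
Definition ip (R : realType) (n : nat) (x y : 'cV[R[i]]_n) : R[i] :=
  \sum_(k < n) x k 0 * conjc (y k 0).

Definition norm2 (R : realType) (n : nat) (x : 'cV[R[i]]_n) : R :=
  \sum_(k < n) cmod (x k 0) ^+ 2.

Definition is_frame (R : realType) (n N : nat) (F : 'I_N -> 'cV[R[i]]_n) : Prop :=
  exists A B : R, 0 < A /\ A <= B /\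
    forall f : 'cV[R[i]]_n,
      A * norm2 f <= \sum_(i < N) cmod (ip f (F i)) ^+ 2 /\
      \sum_(i < N) cmod (ip f (F i)) ^+ 2 <= B * norm2 f.

Definition is_dual (R : realType) (n N : nat) (F G : 'I_N -> 'cV[R[i]]_n) : Prop :=
  forall f : 'cV[R[i]]_n, f = \sum_(i < N) ip f (G i) *: F i.

Definition dual_pair (R : realType) (n N : nat) (F G : 'I_N -> 'cV[R[i]]_n) : Prop :=
  is_frame F /\ is_dual F G.

Definition Eop (R : realType) (n N : nat) (F G : 'I_N -> 'cV[R[i]]_n)
  (L : {set 'I_N}) (f : 'cV[R[i]]_n) : 'cV[R[i]]_n :=
  \sum_(i in L) ip f (F i) *: G i.

Definition is_eigenvalue (R : realType) (n : nat)
  (T : 'cV[R[i]]_n -> 'cV[R[i]]_n) (l : R[i]) : Prop :=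
  exists f : 'cV[R[i]]_n, f != 0 /\ T f = l *: f.

Definition spec_rad (R : realType) (n : nat) (T : 'cV[R[i]]_n -> 'cV[R[i]]_n) : R :=
  sup [set r : R | exists l, is_eigenvalue T l /\ r = cmod l].

Definition r_m (R : realType) (n N : nat) (m : nat) (F G : 'I_N -> 'cV[R[i]]_n) : R :=
  \big[Num.max/0]_(L : {set 'I_N} | #|L| == m) spec_rad (Eop F G L).

Definition r1_inf (R : realType) (n N : nat) : R :=
  inf [set r : R | exists F G : 'I_N -> 'cV[R[i]]_n, dual_pair F G /\ r = r_m 1 F G].

Definition in_R1 (R : realType) (n N : nat) (F G : 'I_N -> 'cV[R[i]]_n) : Prop :=
  dual_pair F G /\ r_m 1 F G = r1_inf R n N.

Definition uniform1 (R : realType) (n N : nat) (F G : 'I_N -> 'cV[R[i]]_n) : Prop :=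
  exists c : R[i], forall i : 'I_N, ip (F i) (G i) = c.

Definition uniform2 (R : realType) (n N : nat) (F G : 'I_N -> 'cV[R[i]]_n) : Prop :=
  uniform1 F G /\
  exists d : R[i], forall i j : 'I_N, i != j -> ip (F i) (G j) * ip (F j) (G i) = d.

(* Main.v *)
Require Import Defs.
From HB Require Import structures.
From mathcomp Require Import all_boot all_order all_algebra.
From mathcomp Require Import complex.
From mathcomp Require Import all_classical all_reals.
From mathcomp Require Import trigo.
From mathcomp Require Import ring lra.
Import Order.TTheory GRing.Theory Num.Theory.
Local Open Scope ring_scope.
Local Open Scope complex_scope.
Local Open Scope classical_set_scope.
Notation cRe := complex.Re.
Notation cIm := complex.Im.

Lemma ipDl (R : realType) n (x y z : 'cV[R[i]]_n) : ip (x + y) z = ip x z + ip y z.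
Proof. rewrite /ip -big_split /=; apply eq_bigr => k _; rewrite mxE mulrDl. done. Qed.

Lemma ipZl (R : realType) n (a : R[i]) (x z : 'cV[R[i]]_n) : ip (a *: x) z = a * ip x z.
Proof. rewrite /ip mulr_sumr; apply eq_bigr => k _; rewrite mxE mulrA. done. Qed.

Lemma ip_conj (R : realType) n (x y : 'cV[R[i]]_n) : ip y x = conjc (ip x y).
Proof. rewrite /ip rmorph_sum; apply eq_bigr => k _. rewrite rmorphM /=. rewrite conjcK mulrC. done. Qed.

Lemma ipDr (R : realType) n (x y z : 'cV[R[i]]_n) : ip z (x + y) = ip z x + ip z y.
Proof. by rewrite ip_conj ipDl rmorphD /= -!ip_conj. Qed.

Lemma ipZr (R : realType) n (a : R[i]) (x z : 'cV[R[i]]_n) : ip z (a *: x) = conjc a * ip z x.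
Proof. by rewrite ip_conj ipZl rmorphM /= -!ip_conj. Qed.

Lemma ip0l (R : realType) n (z : 'cV[R[i]]_n) : ip 0 z = 0.
Proof. by rewrite /ip big1 // => k _; rewrite mxE mul0r. Qed.

Lemma ip_suml (R : realType) n m (v : 'I_m -> 'cV[R[i]]_n) z :
  ip (\sum_(i < m) v i) z = \sum_(i < m) ip (v i) z.
Proof.
rewrite /ip exchange_big /=; apply eq_bigr => k _.
by rewrite summxE big_distrl.
Qed.

Lemma ip_sumr (R : realType) n m (v : 'I_m -> 'cV[R[i]]_n) z :
  ip z (\sum_(i < m) v i) = \sum_(i < m) ip z (v i).
Proof. rewrite ip_conj ip_suml rmorph_sum /=; apply eq_bigr => i _; by rewrite -ip_conj. Qed.

Lemma cmod_sq (R : realType) (z : R[i]) : (cmod z)^+2 = cRe z ^+ 2 + cIm z ^+ 2.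
Proof. case: z => a b; rewrite /cmod /= sqr_sqrtr // addr_ge0 // sqr_ge0 //. Qed.

Lemma cmod_ge0 (R : realType) (z : R[i]) : 0 <= cmod z.
Proof. case: z => a b; rewrite /cmod /= sqrtr_ge0 //. Qed.

Lemma mul_conjc (R : realType) (z : R[i]) : z * conjc z = ((cmod z)^+2)%:C.
Proof.
rewrite cmod_sq; case: z => a b /=; apply/eqP; rewrite eq_complex /=; apply/andP; split; apply/eqP.
  rewrite !expr2; ring.
ring.
Qed.

Lemma cmod_conj (R : realType) (z : R[i]) : cmod (conjc z) = cmod z.
Proof. case: z => a b; rewrite /cmod /= sqrrN //. Qed.

Lemma cRe_le_cmod (R : realType) (z : R[i]) : cRe z <= cmod z.
Proof.
case: z => a b; rewrite /cmod /=.
have [a0|a0] := lerP a 0; first by apply: le_trans a0 _; rewrite sqrtr_ge0.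
rewrite {1}(_ : a = Num.sqrt (a^+2)); last by rewrite sqrtr_sqr ger0_norm // ltW.
by rewrite ler_wsqrtr // lerDl sqr_ge0.
Qed.

Lemma cmod_real (R : realType) (a : R) : 0 <= a -> cmod a%:C = a.
Proof. move=> a0; rewrite /cmod /= expr0n /= addr0 sqrtr_sqr ger0_norm //. Qed.

Lemma spec_rad_ge0 (R : realType) n (T : 'cV[R[i]]_n -> 'cV[R[i]]_n) : 0 <= spec_rad T.
Proof.
rewrite /spec_rad; set S := (X in sup X).
case: (pselect (has_sup S)) => h; last by rewrite sup_out.
case: (h.1) => r Sr; apply: le_trans (sup_upper_bound h Sr).
by case: Sr => l [_ ->]; apply: cmod_ge0.
Qed.

Lemma spec_rad_le (R : realType) n (T : 'cV[R[i]]_n -> 'cV[R[i]]_n) (M : R) :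
  0 <= M -> (forall l, is_eigenvalue T l -> cmod l <= M) -> spec_rad T <= M.
Proof.
move=> M0 HM; rewrite /spec_rad; set S := (X in sup X).
case: (pselect (S !=set0)) => h; last first.
  by rewrite sup_out // => -[].
apply: ge_sup => // r [l [El ->]]; exact: HM.
Qed.

Lemma spec_rad_ge (R : realType) n (T : 'cV[R[i]]_n -> 'cV[R[i]]_n) (M : R) l :
  (forall l, is_eigenvalue T l -> cmod l <= M) -> is_eigenvalue T l -> cmod l <= spec_rad T.
Proof.
move=> HM El; rewrite /spec_rad; set S := (X in sup X).
apply: ub_le_sup; last by exists l.
by exists M => r [l' [El' ->]]; apply: HM.
Qed.

Lemma r_m_ge0 (R : realType) n N m (F G : 'I_N -> 'cV[R[i]]_n) : 0 <= r_m m F G.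
Proof.
rewrite /r_m; elim/big_ind: _ => //.
  by move=> x y x0 y0; rewrite le_max x0.
by move=> L _; apply: spec_rad_ge0.
Qed.

Lemma r_m_le (R : realType) n N m (F G : 'I_N -> 'cV[R[i]]_n) (M : R) :
  0 <= M -> (forall L : {set 'I_N}, #|L| = m -> spec_rad (Eop F G L) <= M) -> r_m m F G <= M.
Proof.
move=> M0 HM; rewrite /r_m; apply: bigmax_le => // L /eqP; exact: HM.
Qed.

Lemma r_m_ge (R : realType) n N m (F G : 'I_N -> 'cV[R[i]]_n) (L : {set 'I_N}) :
  #|L| = m -> spec_rad (Eop F G L) <= r_m m F G.
Proof.
move=> HL; rewrite /r_m; apply: (le_bigmax_cond _ (P := fun L : {set 'I_N} => #|L| == m)).
by rewrite HL.
Qed.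

Lemma Eop1 (R : realType) n N (F G : 'I_N -> 'cV[R[i]]_n) i f :
  Eop F G [set i] f = ip f (F i) *: G i.
Proof. by rewrite /Eop big_set1. Qed.

Lemma Eop2 (R : realType) n N (F G : 'I_N -> 'cV[R[i]]_n) i j f : i != j ->
  Eop F G [set i; j] f = ip f (F i) *: G i + ip f (F j) *: G j.
Proof. move=> ij; by rewrite /Eop big_setU1 ?big_set1 // inE. Qed.

Lemma eig1 (R : realType) n N (F G : 'I_N -> 'cV[R[i]]_n) i l :
  is_eigenvalue (Eop F G [set i]) l -> l = 0 \/ l = ip (G i) (F i).
Proof.
case=> f [f0 Ef]; rewrite Eop1 in Ef.
have := congr1 (fun v => ip v (F i)) Ef; rewrite /= !ipZl.
have [x0|x0] := eqVneq (ip f (F i)) 0.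
  move: Ef; rewrite x0 scale0r => /esym/eqP; rewrite scaler_eq0 (negPf f0) orbF.
  by move/eqP; left.
by move=> e; right; apply: (mulIf x0); rewrite -e mulrC.
Qed.

Lemma eig1_ex (R : realType) n N (F G : 'I_N -> 'cV[R[i]]_n) i :
  ip (G i) (F i) != 0 -> is_eigenvalue (Eop F G [set i]) (ip (G i) (F i)).
Proof.
move=> h; exists (G i); split; last by rewrite Eop1.
by apply: contra h => /eqP ->; rewrite ip0l.
Qed.

Lemma eig2 (R : realType) n N (F G : 'I_N -> 'cV[R[i]]_n) i j (a : R[i]) l :
  i != j -> ip (G i) (F i) = a -> ip (G j) (F j) = a ->
  is_eigenvalue (Eop F G [set i; j]) l ->
  l = 0 \/ (l - a) ^+ 2 = ip (G j) (F i) * ip (G i) (F j).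
Proof.
move=> ij hi hj [f [f0 Ef]]; rewrite Eop2 // in Ef.
set x := ip f (F i) in Ef; set y := ip f (F j) in Ef.
have := congr1 (fun v => ip v (F i)) Ef; rewrite /= ipDl !ipZl hi => e1.
have := congr1 (fun v => ip v (F j)) Ef; rewrite /= ipDl !ipZl hj => e2.
set b := ip (G j) (F i) in e1 *; set c := ip (G i) (F j) in e2 *.
have Hx : ((l - a) ^+ 2 - b * c) * x = (l - a) * (l * x - (x * a + y * b)) + b * (l * y - (x * c + y * a)) by ring.
have Hy : ((l - a) ^+ 2 - b * c) * y = (l - a) * (l * y - (x * c + y * a)) + c * (l * x - (x * a + y * b)) by ring.
rewrite e1 e2 !subrr !mulr0 addr0 in Hx Hy.
have [->|l0] := eqVneq l 0; [by left | right].
apply/eqP; rewrite -subr_eq0; apply/eqP.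
have [x0|x0] := eqVneq x 0; last by apply: (mulIf x0); rewrite mul0r Hx.
have [y0|y0] := eqVneq y 0; last by apply: (mulIf y0); rewrite mul0r Hy.
move: Ef; rewrite x0 y0 !scale0r addr0 => /esym/eqP; rewrite scaler_eq0 (negPf f0) (negPf l0).
done.
Qed.

Lemma eig2_gen (R : realType) n N (F G : 'I_N -> 'cV[R[i]]_n) i j (a : R[i]) l al be :
  i != j -> ip (G i) (F i) = a -> ip (G j) (F j) = a -> l != 0 ->
  al * a + be * ip (G j) (F i) = l * al ->
  al * ip (G i) (F j) + be * a = l * be ->
  (al != 0) || (be != 0) ->
  is_eigenvalue (Eop F G [set i; j]) l.
Proof.
move=> ij hi hj l0 e1 e2 nz; exists (al *: G i + be *: G j).
have Hi : ip (al *: G i + be *: G j) (F i) = l * al by rewrite ipDl !ipZl hi.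
have Hj : ip (al *: G i + be *: G j) (F j) = l * be by rewrite ipDl !ipZl hj.
split; last by rewrite Eop2 // Hi Hj scalerDr !scalerA.
apply/negP => /eqP f0; rewrite f0 ip0l in Hi; rewrite f0 ip0l in Hj.
move: Hi Hj => /esym/eqP Hi /esym/eqP Hj.
rewrite mulf_eq0 (negPf l0) /= in Hi; rewrite mulf_eq0 (negPf l0) /= in Hj.
by move: nz; rewrite (eqP Hi) (eqP Hj) eqxx.
Qed.

Lemma eig2_ex (R : realType) n N (F G : 'I_N -> 'cV[R[i]]_n) i j (a : R[i]) l :
  i != j -> ip (G i) (F i) = a -> ip (G j) (F j) = a -> l != 0 ->
  (l - a) ^+ 2 = ip (G j) (F i) * ip (G i) (F j) ->
  is_eigenvalue (Eop F G [set i; j]) l.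
Proof.
move=> ij hi hj l0; set b := ip (G j) (F i); set c := ip (G i) (F j) => e.
have [b0|b0] := eqVneq b 0.
  have la : l = a.
    have : (l - a) ^+ 2 == 0 by rewrite e b0 mul0r.
    by rewrite expf_eq0 /= subr_eq0 => /eqP.
  apply: (@eig2_gen _ _ _ F G i j a l 0 1) => //; rewrite -/b ?b0 ?la; [ring | ring | by rewrite oner_eq0 orbT].
apply: (@eig2_gen _ _ _ F G i j a l b (l - a)) => //; rewrite -/b -/c ?b0 //.
  ring.
have -> : b * c = (l - a) ^+ 2 by rewrite e.
ring.
Qed.

Lemma ip_delta (R : realType) n (k : 'I_n) (g : 'cV[R[i]]_n) :
  ip (delta_mx k 0) g = conjc (g k 0).
Proof.
rewrite /ip (bigD1 k) //= big1 => [|m mk]; rewrite !mxE ?eqxx /= ?mul1r ?addr0 //.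
by rewrite (negPf mk) mul0r.
Qed.

Lemma dual_coord (R : realType) n N (F G : 'I_N -> 'cV[R[i]]_n) :
  is_dual F G -> forall k l : 'I_n, \sum_(i < N) F i l 0 * conjc (G i k 0) = (l == k)%:R.
Proof.
move=> hd k l; have := congr1 (fun v : 'cV[R[i]]_n => v l 0) (hd (delta_mx k 0)).
rewrite /= summxE !mxE eqxx andbT => ->.
by apply: eq_bigr => i _; rewrite mxE ip_delta mulrC.
Qed.

Lemma trace1 (R : realType) n N (F G : 'I_N -> 'cV[R[i]]_n) :
  is_dual F G -> \sum_(i < N) ip (F i) (G i) = n%:R.
Proof.
move=> hd; rewrite /ip exchange_big /=.
rewrite (eq_bigr (fun _ => 1)) ?sumr_const ?card_ord //.
by move=> k _; rewrite dual_coord // eqxx.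
Qed.

Lemma trace2 (R : realType) n N (F G : 'I_N -> 'cV[R[i]]_n) :
  is_dual F G -> \sum_(i < N) \sum_(j < N) ip (F i) (G j) * ip (F j) (G i) = n%:R.
Proof.
move=> hd.
have -> : \sum_(i < N) \sum_(j < N) ip (F i) (G j) * ip (F j) (G i) =
  \sum_(k < n) \sum_(l < n) (\sum_(i < N) F i k 0 * conjc (G i l 0)) *
                            (\sum_(j < N) F j l 0 * conjc (G j k 0)).
  transitivity (\sum_(i < N) \sum_(j < N) \sum_(k < n) \sum_(l < n)
     (F i k 0 * conjc (G j k 0)) * (F j l 0 * conjc (G i l 0))).
    apply: eq_bigr => i _; apply: eq_bigr => j _.
    rewrite /ip big_distrl /=; apply: eq_bigr => k _; rewrite big_distrr //.
  transitivity (\sum_(k < n) \sum_(l < n) \sum_(i < N) \sum_(j < N)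
     (F i k 0 * conjc (G j k 0)) * (F j l 0 * conjc (G i l 0))).
    rewrite (eq_bigr (fun i => \sum_(k < n) \sum_(j < N) \sum_(l < n)
        (F i k 0 * conjc (G j k 0)) * (F j l 0 * conjc (G i l 0)))); last first.
      by move=> i _; rewrite exchange_big.
    rewrite exchange_big /=; apply: eq_bigr => k _.
    rewrite (eq_bigr (fun i => \sum_(l < n) \sum_(j < N)
        (F i k 0 * conjc (G j k 0)) * (F j l 0 * conjc (G i l 0)))); last first.
      by move=> i _; rewrite exchange_big.
    by rewrite exchange_big.
  apply: eq_bigr => k _; apply: eq_bigr => l _.
  rewrite big_distrl /=; apply: eq_bigr => i _; rewrite big_distrr /=.
  by apply: eq_bigr => j _; ring.
rewrite (eq_bigr (fun _ => 1)) ?sumr_const ?card_ord //.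
move=> k _; rewrite (bigD1 k) //= !(@dual_coord _ _ _ F G hd) eqxx mulr1.
rewrite big1 ?addr0 // => l lk.
by rewrite !(@dual_coord _ _ _ F G hd) [k == l]eq_sym (negPf lk) ?mul0r ?mulr0.
Qed.

Definition theta (R : realType) (N : nat) : R := pi *+ 2 / N%:R.
Definition omega (R : realType) (N : nat) : R[i] := (cos (theta R N)) +i* (sin (theta R N)).

Lemma omegaX (R : realType) N m :
  omega R N ^+ m = (cos (theta R N *+ m)) +i* (sin (theta R N *+ m)).
Proof.
elim: m => [|m IH]; first by rewrite expr0 !mulr0n cos0 sin0.
rewrite exprS IH mulrS cosD sinD /omega.
by apply/eqP; rewrite eq_complex /= eqxx /= addrC.
Qed.

Lemma omega_norm (R : realType) N : conjc (omega R N) * omega R N = 1.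
Proof.
rewrite /omega /=; apply/eqP; rewrite eq_complex /=.
apply/andP; split; apply/eqP.
  rewrite -(cos2Dsin2 (theta R N)); ring.
ring.
Qed.

Lemma omegaN (R : realType) N : (0 < N)%N -> omega R N ^+ N = 1.
Proof.
move=> N0; rewrite omegaX /theta.
have -> : pi *+ 2 / N%:R *+ N = (pi *+ 2 : R) by rewrite -[LHS]mulr_natr divfK // pnatr_eq0 -lt0n.
by rewrite cos2pi sin2pi.
Qed.

Lemma omega_neq1 (R : realType) N m : (0 < m)%N -> (m < N)%N -> omega R N ^+ m != 1.
Proof.
move=> m0 mN; rewrite omegaX; apply/negP => /eqP e.
have e1 : cos (theta R N *+ m) = 1 := congr1 (@complex.Re R) e.
clear e.
pose x : R := pi * m%:R / N%:R.
have N0 : (0 < N)%N by apply: ltn_trans m0 mN.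
have N0' : (0 : R) < N%:R by rewrite ltr0n.
have tx : theta R N *+ m = x *+ 2.
  rewrite /theta /x -[LHS]mulr_natr -[RHS]mulr_natr -[pi *+ 2]mulr_natr.
  field; exact: lt0r_neq0.
have xpi : 0 < x < pi.
  apply/andP; split.
    by rewrite /x divr_gt0 // mulr_gt0 ?pi_gt0 // ltr0n.
  rewrite /x ltr_pdivrMr // ltr_pM2l ?pi_gt0 // ltr_nat //.
have sx := sin_gt0_pi xpi.
rewrite tx cos_mulr2n cos2sin2 in e1.
rewrite -[(1 - _) *+ 2]mulr_natr in e1.
set s := sin x in e1 sx.
nra.
Qed.

Lemma geom0 (R : realType) N (z : R[i]) : z ^+ N = 1 -> z != 1 -> \sum_(i < N) z ^+ i = 0.
Proof.
move=> zN z1; have := subrX1 z N; rewrite zN subrr => /esym/eqP.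
by rewrite mulf_eq0 subr_eq0 (negPf z1) /= => /eqP.
Qed.


Definition Hh (R : realType) n N (i : 'I_N) : 'cV[R[i]]_n := \col_(k < n) omega R N ^+ (i * k).
Definition Kh (R : realType) n N (i : 'I_N) : 'cV[R[i]]_n := (N%:R)^-1 *: Hh R n N i.

Lemma conj_omega_cancel (R : realType) N p : conjc (omega R N ^+ p) * omega R N ^+ p = 1.
Proof. by rewrite rmorphXn /= -exprMn omega_norm expr1n. Qed.

Lemma cross_sum (R : realType) N (k l : nat) : (k < l)%N -> (l < N)%N ->
  \sum_(i < N) conjc (omega R N ^+ (i * k)) * omega R N ^+ (i * l) = 0.
Proof.
move=> kl lN; set z := omega R N ^+ (l - k).
have -> : \sum_(i < N) conjc (omega R N ^+ (i * k)) * omega R N ^+ (i * l) = \sum_(i < N) z ^+ i.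
  apply: eq_bigr => i _.
  have -> : (i * l = i * k + (l - k) * i)%N by rewrite [((l - k) * i)%N]mulnC -mulnDr subnKC // ltnW.
  by rewrite exprD mulrA conj_omega_cancel mul1r exprM.
apply: geom0.
  by rewrite /z -exprM mulnC exprM omegaN ?expr1n // (leq_ltn_trans (leq0n k) (ltn_trans kl lN)).
apply: omega_neq1; first by rewrite subn_gt0.
by apply: leq_ltn_trans (leq_subr _ _) lN.
Qed.

Lemma harm_sum (R : realType) n N (k l : 'I_n) : (n < N)%N ->
  \sum_(i < N) conjc (omega R N ^+ (i * k)) * omega R N ^+ (i * l) = (k == l)%:R * N%:R.
Proof.
move=> nN; have kN : (k < N)%N by apply: ltn_trans (ltn_ord k) nN.
have lN : (l < N)%N by apply: ltn_trans (ltn_ord l) nN.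
case: (ltngtP k l) => [kl|lk|kl].
- rewrite cross_sum // (_ : (k == l) = false) ?mul0r //.
  by apply/eqP => e; move: kl; rewrite e ltnn.
- rewrite -[LHS]conjcK rmorph_sum /=.
  rewrite (eq_bigr (fun i : 'I_N => conjc (omega R N ^+ (i * l)) * omega R N ^+ (i * k))).
    rewrite cross_sum // conjc0 (_ : (k == l) = false) ?mul0r //.
    by apply/eqP => e; move: lk; rewrite e ltnn.
  by move=> i _; rewrite rmorphM /= conjcK mulrC.
- have -> : k = l by apply: val_inj.
  rewrite eqxx mul1r (eq_bigr (fun _ => 1)) ?sumr_const ?card_ord //.
  by move=> i _; rewrite conj_omega_cancel.
Qed.

Lemma harm_dual (R : realType) n N : (n < N)%N -> is_dual (Hh R n N) (Kh R n N).
Proof.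
move=> nN f; apply/matrixP => l c; rewrite (ord1 c) summxE.
have N0 : (N%:R : R[i]) != 0 by rewrite pnatr_eq0 -lt0n (leq_ltn_trans (leq0n n) nN).
transitivity (\sum_(i < N) \sum_(k < n) (N%:R^-1 * f k 0) *
     (conjc (omega R N ^+ (i * k)) * omega R N ^+ (i * l))); last first.
  apply: eq_bigr => i _; rewrite !mxE /Kh ipZr /ip big_distrr big_distrl /=.
  apply: eq_bigr => k _; rewrite !mxE conjc_inv conjc_nat; ring.
rewrite exchange_big /=.
rewrite (eq_bigr (fun k : 'I_n => (N%:R^-1 * f k 0) * ((k == l)%:R * N%:R))); last first.
  by move=> k _; rewrite -big_distrr /= harm_sum.
rewrite (bigD1 l) //= big1 ?addr0 => [|k kl]; last by rewrite (negPf kl) mul0r mulr0.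
by rewrite eqxx mul1r mulrAC mulVf // mul1r.
Qed.

Lemma ip_self (R : realType) n (f : 'cV[R[i]]_n) : ip f f = (norm2 f)%:C.
Proof. rewrite /ip /norm2 rmorph_sum /=; apply: eq_bigr => k _; exact: mul_conjc. Qed.

Lemma harm_tight (R : realType) n N (f : 'cV[R[i]]_n) : (n < N)%N ->
  \sum_(i < N) cmod (ip f (Hh R n N i)) ^+ 2 = N%:R * norm2 f.
Proof.
move=> nN; have N0 : (N%:R : R[i]) != 0 by rewrite pnatr_eq0 -lt0n (leq_ltn_trans (leq0n n) nN).
apply: (@complexI R); rewrite rmorphM rmorph_nat /= -ip_self.
have hd := @harm_dual R n N nN f.
have -> : ip f f = ip f (\sum_(i < N) ip f (Kh R n N i) *: Hh R n N i) by rewrite -hd.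
rewrite ip_sumr rmorph_sum /= mulr_sumr; apply: eq_bigr => i _.
have cN : conjc ((N%:R)^-1 : R[i]) = (N%:R)^-1 by rewrite conjc_inv conjc_nat.
rewrite -mul_conjc ipZr /Kh ipZr rmorphM /= cN cN.
by rewrite !mulrA mulfV // mul1r mulrC.
Qed.

Lemma harm_pair (R : realType) n N : (n < N)%N -> dual_pair (Hh R n N) (Kh R n N).
Proof.
move=> nN; split; last exact: harm_dual.
have N0 : (0 : R) < N%:R by rewrite ltr0n (leq_ltn_trans (leq0n n) nN).
exists N%:R, N%:R; split => //; split => // f.
by rewrite harm_tight.
Qed.

Lemma harm_ipKH (R : realType) n N (i : 'I_N) :
  ip (Kh R n N i) (Hh R n N i) = (n%:R / N%:R : R)%:C.
Proof.
rewrite /Kh ipZl /ip (eq_bigr (fun _ => 1)) ?sumr_const ?card_ord; last first.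
  by move=> k _; rewrite !mxE mulrC conj_omega_cancel.
by rewrite mulrC fmorph_div /= !rmorph_nat.
Qed.

Lemma harm_r1 (R : realType) n N : (n < N)%N -> r_m 1 (Hh R n N) (Kh R n N) <= n%:R / N%:R.
Proof.
move=> nN; have a0 : (0 : R) <= n%:R / N%:R by rewrite divr_ge0 ?ler0n.
apply: r_m_le => // L /eqP /cards1P [i ->].
apply: spec_rad_le => // l /eig1 [->|->].
  by rewrite /cmod /= expr0n /= addr0 sqrtr0.
by rewrite harm_ipKH cmod_real.
Qed.

Lemma cmod0 (R : realType) : cmod (0 : R[i]) = 0.
Proof. exact: ComplexField.Normc.normc0. Qed.

Lemma cmodD (R : realType) (x y : R[i]) : cmod (x + y) <= cmod x + cmod y.
Proof. exact: le_normcD. Qed.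

Lemma cmodM (R : realType) (x y : R[i]) : cmod (x * y) = cmod x * cmod y.
Proof. exact: ComplexField.Normc.normcM. Qed.

Lemma cRe_sum (R : realType) (I : finType) (P : pred I) (z : I -> R[i]) :
  cRe (\sum_(i | P i) z i) = \sum_(i | P i) cRe (z i).
Proof. by apply: (big_morph _ (fun x y => _) (erefl _)); case=> ? ? [? ?]. Qed.

Lemma cRe_nat (R : realType) m : cRe (m%:R : R[i]) = m%:R.
Proof. by rewrite -(rmorph_nat (@real_complex_def R (Phant R))). Qed.

Lemma R1_diag (R : realType) n N (F G : 'I_N -> 'cV[R[i]]_n) : (n < N)%N -> in_R1 F G ->
  forall i, ip (F i) (G i) = (n%:R / N%:R : R)%:C.
Proof.
move=> nN [[hfr hd] hr].
set a : R := n%:R / N%:R.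
have N0 : (0 : R) < N%:R by rewrite ltr0n (leq_ltn_trans (leq0n n) nN).
have ra : r_m 1 F G <= a.
  rewrite hr /r1_inf; apply: le_trans (harm_r1 R n N nN).
  apply: ge_inf; last by exists (Hh R n N), (Kh R n N); split => //; exact: harm_pair.
  by exists 0 => x [F' [G' [_ ->]]]; exact: r_m_ge0.
have hz : forall i, cmod (ip (F i) (G i)) <= a.
  move=> i; apply: le_trans ra.
  rewrite ip_conj cmod_conj.
  apply: le_trans (r_m_ge _ _ _ _ F G [set i] (cards1 i)).
  have [g0|g0] := eqVneq (ip (G i) (F i)) 0.
    rewrite g0 cmod0; exact: spec_rad_ge0.
  apply: (@spec_rad_ge _ _ _ (cmod (ip (G i) (F i)))); last exact: eig1_ex.
  move=> l /eig1 [->|->] //; rewrite cmod0 cmod_ge0 //.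
have hRe : forall i, cRe (ip (F i) (G i)) = a.
  have hle : forall i, 0 <= a - cRe (ip (F i) (G i)).
    by move=> i; rewrite subr_ge0 (le_trans (cRe_le_cmod _ _) (hz i)).
  have hsum : \sum_(i < N) (a - cRe (ip (F i) (G i))) = 0.
    rewrite sumrB sumr_const card_ord -cRe_sum (@trace1 _ _ _ F G hd) cRe_nat.
    by rewrite -[a *+ N]mulr_natr /a divfK ?subrr // gt_eqF.
  move=> i; apply/eqP; rewrite eq_sym -subr_eq0; apply/eqP.
  exact: (psumr_eq0P (fun j _ => hle j) hsum).
have hIm : forall i, cIm (ip (F i) (G i)) = 0.
  move=> i; have := hz i; have := cmod_sq _ (ip (F i) (G i)); rewrite hRe => e h.
  have c0 := cmod_ge0 _ (ip (F i) (G i)).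
  have h2 : cIm (ip (F i) (G i)) ^+ 2 <= 0 by nra.
  have : cIm (ip (F i) (G i)) ^+ 2 = 0 by apply/le_anti; rewrite h2 sqr_ge0.
  by move/eqP; rewrite expf_eq0 /= => /eqP.
move=> i; move: (hRe i) (hIm i); case: (ip (F i) (G i)) => x y /= -> -> //.
Qed.

Lemma sq_alg (R : realType) (s : R[i]) (t : R) : 0 <= t -> 0 <= cRe s -> cRe s <= Num.sqrt t ->
  cRe (s ^+ 2) <= t /\ (cRe (s ^+ 2) = t -> s ^+ 2 = t%:C).
Proof.
move=> t0; case: s => u v /= u0 ut.
have r0 := sqrtr_ge0 t; have rt := sqr_sqrtr t0.
set r := Num.sqrt t in ut r0 rt.
have hu : u ^+ 2 <= t by rewrite -rt; nra.
split; first by nra.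
move=> e; have hv : v ^+ 2 <= 0 by nra.
have : v ^+ 2 = 0 by apply/le_anti; rewrite hv sqr_ge0.
move/eqP; rewrite expf_eq0 /= => /eqP v0.
by rewrite expr2; apply/eqP; rewrite eq_complex /= -e v0 !mulr0 !mul0r subr0 addr0 !eqxx.
Qed.

Lemma eig2_bound (R : realType) n N (F G : 'I_N -> 'cV[R[i]]_n) i j (a : R) :
  i != j -> ip (G i) (F i) = a%:C -> ip (G j) (F j) = a%:C -> 0 <= a ->
  forall l, is_eigenvalue (Eop F G [set i; j]) l ->
  cmod l <= a + 1 + cmod (ip (G j) (F i) * ip (G i) (F j)).
Proof.
move=> ij hi hj a0 l El.
set w := ip (G j) (F i) * ip (G i) (F j).
have w0 := cmod_ge0 _ w.
case: (@eig2 _ _ _ F G i j _ l ij hi hj El) => [->|e]; first by rewrite cmod0; lra.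
have q0 := cmod_ge0 _ (l - a%:C).
have hq : cmod (l - a%:C) ^+ 2 = cmod w by rewrite /w -e [in RHS]expr2 cmodM expr2.
have hl : cmod l <= a + cmod (l - a%:C).
  by have := cmodD _ (a%:C) (l - a%:C); rewrite addrCA subrr addr0 cmod_real.
set q := cmod (l - a%:C) in q0 hq hl.
rewrite -hq.
have hq1 : q <= 1 + q ^+ 2.
  have [q1|q1] := lerP q 1; first by apply: le_trans q1 _; rewrite lerDl sqr_ge0.
  apply: le_trans (_ : q ^+ 2 <= _); last by rewrite lerDr.
  by rewrite expr2 ler_peMr // ltW.
lra.
Qed.

Lemma count_pairs (V : zmodType) N (x : V) :
  \sum_(i < N) \sum_(j < N | j != i) x = x *+ (N * N.-1).
Proof.
have h : forall i : 'I_N, \sum_(j < N | j != i) x = x *+ N.-1.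
  move=> i; rewrite sumr_const; congr (_ *+ _).
  rewrite -[N in N.-1](card_ord N) -(cardC1 i); apply: eq_card => j; by rewrite !inE.
rewrite (eq_bigr _ (fun i _ => h i)) sumr_const card_ord.
by rewrite -mulrnA mulnC.
Qed.
Lemma key_identity (R : realType) n N : (n < N)%N ->
  (n%:R - N%:R * ((n%:R / N%:R) * (n%:R / N%:R)) =
   (N * N.-1)%:R * (n%:R * (N%:R - n%:R) / (N%:R ^+ 2 * (N%:R - 1))) :> R).
Proof.
case: N => [//|[|M]] nN.
  move: nN; rewrite ltnS leqn0 => /eqP ->.
  by rewrite muln0 !mul0r mulr0 subr0.
have e : ((M.+2).-1%:R : R) = (M.+2)%:R - 1 by rewrite -natr1 addrK.
rewrite natrM e.
have h1 : ((M.+2)%:R : R) != 0 by rewrite pnatr_eq0.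
have h2 : ((M.+2)%:R - 1 : R) != 0 by rewrite -e pnatr_eq0.
field; have := ler0n R M => hM; apply/andP; split; apply/eqP; lra.
Qed.

Theorem mainTheorem12 (R : realType) (n N : nat) (F G : 'I_N -> 'cV[R[i]]_n) :
  (n < N)%N -> in_R1 F G ->
  (r_m 2 F G = n%:R / N%:R
      + Num.sqrt (n%:R * (N%:R - n%:R) / (N%:R ^+ 2 * (N%:R - 1)))
   <-> uniform2 F G).
Proof.
move=> nN h1.
have hd : is_dual F G by case: h1 => [[_ ?] _].
have kid := key_identity R n N nN.
set a : R := n%:R / N%:R in kid *.
set t : R := n%:R * (N%:R - n%:R) / (N%:R ^+ 2 * (N%:R - 1)) in kid *.
have N0 : (0 < N)%N := leq_ltn_trans (leq0n n) nN.
have N0' : (0 : R) < N%:R by rewrite ltr0n.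
have a0 : 0 <= a by rewrite /a divr_ge0 ?ler0n.
have t0 : 0 <= t.
  have N1 : (1 : R) <= N%:R by rewrite ler1n.
  have nN' : (n%:R : R) <= N%:R by rewrite ler_nat ltnW.
  rewrite /t divr_ge0 // ?mulr_ge0 ?ler0n ?subr_ge0 ?exprn_ge0 ?ler0n //.
have hFG := R1_diag R n N F G nN h1; rewrite -/a in hFG.
have hGF : forall i, ip (G i) (F i) = a%:C by move=> i; rewrite ip_conj hFG conjc_real.
pose p i j := ip (F i) (G j) * ip (F j) (G i).
have wp : forall i j, ip (G j) (F i) * ip (G i) (F j) = conjc (p i j).
  by move=> i j; rewrite /p rmorphM /= -!ip_conj.
have hsum : \sum_(i < N) \sum_(j < N | j != i) p i j = ((N * N.-1)%:R * t)%:C.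
  have e2 := @trace2 _ _ _ F G hd.
  have e3 : \sum_(i < N) \sum_(j < N) p i j =
      \sum_(i < N) (a%:C * a%:C) + \sum_(i < N) \sum_(j < N | j != i) p i j.
    rewrite -big_split; apply: eq_bigr => i _; rewrite (bigD1 i) //= /p hFG //.
  rewrite e2 sumr_const card_ord in e3.
  have -> : \sum_(i < N) \sum_(j < N | j != i) p i j = n%:R - (a%:C * a%:C) *+ N.
    by rewrite e3 [X in X - _]addrC addrK.
  rewrite -kid rmorphB /= [in RHS]rmorphM /= rmorph_nat [(a * a)%:C]rmorphM /=.
  congr (_ - _); rewrite -mulr_natl; congr (_ * _).
  by rewrite rmorph_nat.
split => [hr2|hu].
  have hpair : forall i j, i != j -> cRe (p i j) <= t /\ (cRe (p i j) = t -> p i j = t%:C).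
    move=> i j ij.
    set w := ip (G j) (F i) * ip (G i) (F j).
    have hRp : cRe (p i j) = cRe w by rewrite /w wp; case: (p i j).
    set s := sqrtc w.
    have hs2 : s ^+ 2 = w := sqr_sqrtc w.
    have hsRe : 0 <= cRe s by rewrite /s; case: (w) => x y; rewrite /sqrtc /= sqrtr_ge0.
    have hle : cRe s <= Num.sqrt t.
      suff : a + cRe s <= a + Num.sqrt t by rewrite lerD2l.
      rewrite -hr2.
      set lam := a%:C + s.
      have hlam : cRe lam = a + cRe s by rewrite /lam; case: (s).
      rewrite -hlam.
      have [l0|l0] := eqVneq lam 0.
        rewrite l0; exact: r_m_ge0.
      have El : is_eigenvalue (Eop F G [set i; j]) lam.
        apply: (@eig2_ex _ _ _ F G i j (a%:C) lam ij (hGF i) (hGF j) l0).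
        by rewrite /lam [a%:C + s]addrC addrK hs2.
      apply: le_trans (cRe_le_cmod _ _) _.
      apply: le_trans (r_m_ge _ _ _ _ F G [set i; j] _); last by rewrite cards2 ij.
      apply: (@spec_rad_ge _ _ _ (a + 1 + cmod w)) => //.
      exact: (@eig2_bound _ _ _ F G i j a ij (hGF i) (hGF j) a0).
    have [h1' h2'] := @sq_alg _ s t t0 hsRe hle.
    rewrite hRp -hs2; split => // e.
    have := h2' e; rewrite hs2 => hw.
    by rewrite -[p i j]conjcK -wp -/w hw conjc_real.
  have hnn : forall i, 0 <= \sum_(j < N | j != i) (t - cRe (p i j)).
    move=> i; apply: sumr_ge0 => j ji; rewrite subr_ge0.
    by case: (hpair i j _) => //; rewrite eq_sym.
  have h0 : \sum_(i < N) \sum_(j < N | j != i) (t - cRe (p i j)) = 0.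
    have e : cRe (\sum_(i < N) \sum_(j < N | j != i) p i j) = (N * N.-1)%:R * t by rewrite hsum.
    rewrite cRe_sum in e.
    under eq_bigr do rewrite sumrB.
    rewrite sumrB count_pairs -mulr_natl.
    rewrite (eq_bigr (fun i => cRe (\sum_(j < N | j != i) p i j))); last by move=> i _; rewrite cRe_sum.
    by rewrite e subrr.
  split; first by exists a%:C.
  exists t%:C => i j ij.
  case: (hpair i j ij) => _; apply.
  have hi0 : \sum_(j < N | j != i) (t - cRe (p i j)) = 0.
    by apply: (psumr_eq0P _ h0) => // k _; exact: hnn.
  have : t - cRe (p i j) = 0.
    apply: (psumr_eq0P _ hi0); last by rewrite eq_sym.
    move=> k ki; rewrite subr_ge0.
    by case: (hpair i k _) => //; rewrite eq_sym.
  by move/eqP; rewrite subr_eq0 => /eqP.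
case: hu => _ [d hdd].
have hw : forall i j, i != j -> ip (G j) (F i) * ip (G i) (F j) = t%:C.
  move=> i j ij.
  have N1 : (1 < N)%N.
    by have := max_card [set i; j]%SET; rewrite cards2 ij card_ord.
  have dd : d = t%:C.
    have e : \sum_(i < N) \sum_(j < N | j != i) p i j = d *+ (N * N.-1).
      rewrite -count_pairs; apply: eq_bigr => k _; apply: eq_bigr => l lk.
      by apply: hdd; rewrite eq_sym.
    rewrite hsum in e.
    have m0 : ((N * N.-1)%:R : R[i]) != 0.
      by rewrite pnatr_eq0 muln_eq0 negb_or -!lt0n N0 /= ltn_predRL.
    apply: (mulfI m0); rewrite mulr_natl -e rmorphM /= rmorph_nat //.
  by rewrite wp /p hdd // dd conjc_real.
have T0 : 0 <= a + Num.sqrt t by rewrite addr_ge0 // sqrtr_ge0.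
apply/le_anti/andP; split.
  apply: r_m_le => // L /eqP /cards2P [i [j [ij ->]]].
  apply: spec_rad_le => // l El.
  case: (@eig2 _ _ _ F G i j _ l ij (hGF i) (hGF j) El) => [->|e].
    by rewrite cmod0.
  rewrite hw // in e.
  have q0 := cmod_ge0 _ (l - a%:C).
  have hq : cmod (l - a%:C) = Num.sqrt t.
    by rewrite -(cmod_real _ _ t0) -e expr2 cmodM -expr2 sqrtr_sqr ger0_norm.
  by have := cmodD _ (a%:C) (l - a%:C); rewrite addrCA subrr addr0 cmod_real // hq.
have [n0|n0] := eqVneq n 0%N.
  have -> : a + Num.sqrt t = 0 by rewrite /a /t n0 !mul0r sqrtr0 addr0.
  exact: r_m_ge0.
have N1 : (1 < N)%N by apply: leq_ltn_trans nN; rewrite lt0n.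
pose i0 : 'I_N := Ordinal N0.
pose j0 : 'I_N := Ordinal N1.
have ij : i0 != j0 by [].
have ap : 0 < a by rewrite /a divr_gt0 // ltr0n lt0n.
set lam := (a + Num.sqrt t)%:C.
have l0 : lam != 0.
  rewrite /lam; apply/eqP => /(congr1 (@complex.Re R)) /= h.
  have := sqrtr_ge0 t; lra.
have El : is_eigenvalue (Eop F G [set i0; j0]) lam.
  apply: (@eig2_ex _ _ _ F G i0 j0 (a%:C) lam ij (hGF i0) (hGF j0) l0).
  by rewrite hw // /lam rmorphD /= [a%:C + _]addrC addrK -rmorphXn /= sqr_sqrtr.
apply: le_trans (r_m_ge _ _ _ _ F G [set i0; j0] _); last by rewrite cards2 ij.
rewrite -[X in X <= _](cmod_real _ _ T0).
apply: (@spec_rad_ge _ _ _ (a + 1 + cmod (ip (G j0) (F i0) * ip (G i0) (F j0)))) => //.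
exact: (@eig2_bound _ _ _ F G i0 j0 a ij (hGF i0) (hGF j0) a0).
Qed.
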